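(* Let $\mathcal B$ be a binomial class of reluctant functions with $|F(\emptyset,X)|=1$ for every finite $X$, and for integers $m,x\ge0$ let $p_m(x)=|F(S,X)|$ for any $S,X$ with $|S|=m$, $|X|=x$. Let $x$ be a positive integer, $X=\{1,\dots,x\}$, $n\ge0$, and let $z_0\le z_1\le\cdots\le z_{n-1}$ be integers in $\{1,\dots,x\}$. Then $$p_n(x)=\sum_{i=0}^{n-1}\binom ni\,p_{n-i}(x-z_i)\cdot ord(z_0,\dots,z_{i-1})\;+\;ord(z_0,\dots,z_{n-1}),$$ where $ord()=1$ for $i=0$.
   Context: For finite disjoint sets $S,X$, a reluctant function from $S$ to $X$ is a map $f:S\to S\cup X$ such that for every $s\in S$ there is a positive integer $k$ with $f^k(s)\in X$ (iterates of $f$); then $f^k(s)$ is the final image of $s$. A binomial class $\mathcal B$ assigns to each pair $(S,X)$ of finite disjoint sets a set $F(S,X)$ of reluctant functions from $S$ to $X$ such that: (i) $F$ is compatible with bijections (bijections $S\to S'$, $X\to X'$ transport $F(S,X)$ onto $F(S',X')$); (ii) for disjoint finite $X,Y$ (disjoint from $S$), the map sending a reluctant function $f$ from $S$ to $X\cup Y$ to the pair $(f_A,f_{S\setminus A})$, where $A$ is the set of $s\in S$ whose final image lies in $X$ and $f_A,f_{S\setminus A}$ are the restrictions, is a bijection from $F(S,X\cup Y)$ onto $\bigsqcup_{A\subseteq S}F(A,X)\times F(S\setminus A,Y)$. Order statistics: for $S=\{s_0,\dots,s_{m-1}\}$, $X=\{1,\dots,x\}$ and $f\in F(S,X)$, let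 $x_i$ be the final image of $s_i$ and $x_{(0)}\le\cdots\le x_{(m-1)}$ the nondecreasing rearrangement of $(x_0,\dots,x_{m-1})$. For integers $z_0\le\cdots\le z_{m-1}$ in $X$, $ord(z_0,\dots,z_{m-1})$ is the number of $f\in F(S,X)$ with $x_{(j)}\le z_j$ for all $0\le j\le m-1$ (this depends only on $m$ and the $z_j$). *)

(* Defs.v *)
From mathcomp Require Import all_boot.
Set Implicit Arguments. Unset Strict Implicit. Unset Printing Implicit Defensive.

(* A function from S to X is modelled as f : S -> S + X; the disjoint union
   S ⊔ X is the sum type, so disjointness is automatic. *)

Definition step (S X : Type) (f : S -> S + X) (u : S + X) : S + X :=
  match u with inl s => f s | inr x => inr x end.

Definition reluctant (S X : Type) (f : S -> S + X) : Prop :=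
  forall s : S, exists k : nat, 0 < k /\ exists x : X, iter k (step f) (inl s) = inr x.

(* Final image of s (for a reluctant f the orbit of s enters X within #|S|
   steps, and the step function fixes X, so this is f^k(s) for the k at
   which f^k(s) lands in X).  None only for non-reluctant f. *)
Definition final (S : finType) (X : Type) (f : S -> S + X) (s : S) : option X :=
  match iter #|S| (step f) (inl s) with inl _ => None | inr x => Some x end.

Definition sum_map (A A' B B' : Type) (g : A -> A') (h : B -> B') (u : A + B) : A' + B' :=
  match u with inl a => inl (g a) | inr b => inr (h b) end.

Section Split.
Variables (S X Y : finType).
Implicit Types (f : {ffun S -> S + (X + Y)}) (A : {set S}).

Definition finalX f : {set S} :=
  [set s | if final f s is Some (inl _) then true else false].

(* restriction of f to A (as a function from A to X); values outside A + X
   never occur when A = finalX f, they are sent to an arbitrary default. *)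
Definition restrX A f : {ffun {s : S | s \in A} -> {s : S | s \in A} + X} :=
  [ffun s => match f (val s) with
             | inl s' => if @insub _ (fun t => t \in A) _ s' is Some t then inl t else inl s
             | inr (inl x) => inr x
             | inr (inr _) => inl s
             end].

Definition restrY A f : {ffun {s : S | s \notin A} -> {s : S | s \notin A} + Y} :=
  [ffun s => match f (val s) with
             | inl s' => if @insub _ (fun t => t \notin A) _ s' is Some t then inl t else inl s
             | inr (inr y) => inr y
             | inr (inl _) => inl s
             end].
End Split.

Definition fclass := forall S X : finType, {set {ffun S -> S + X}}.

Record binomial_class (F : fclass) : Prop := BinomialClass {
  bc_reluctant : forall (S X : finType) (f : {ffun S -> S + X}),
      f \in F S X -> reluctant f;
  (* (i) compatibility with bijections *)
  bc_bij : forall (S S' X X' : finType) (sg : S -> S') (tau : X -> X'),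
      bijective sg -> bijective tau ->
      forall (f : {ffun S -> S + X}) (f' : {ffun S' -> S' + X'}),
      (forall s, f' (sg s) = sum_map sg tau (f s)) ->
      (f \in F S X) = (f' \in F S' X');
  (* (ii) the splitting map is a bijection onto the disjoint union *)
  bc_split_into : forall (S X Y : finType) (f : {ffun S -> S + (X + Y)}),
      f \in F S (X + Y)%type ->
      restrX (finalX f) f \in F _ X /\ restrY (finalX f) f \in F _ Y;
  bc_split_inj : forall (S X Y : finType) (f g : {ffun S -> S + (X + Y)}),
      f \in F S (X + Y)%type -> g \in F S (X + Y)%type ->
      finalX f = finalX g ->
      restrX (finalX f) f = restrX (finalX f) g ->
      restrY (finalX f) f = restrY (finalX f) g -> f = g;
  bc_split_onto : forall (S X Y : finType) (A : {set S})
      (g : {ffun {s : S | s \in A} -> {s : S | s \in A} + X})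
      (h : {ffun {s : S | s \notin A} -> {s : S | s \notin A} + Y}),
      g \in F _ X -> h \in F _ Y ->
      exists f : {ffun S -> S + (X + Y)}, [/\ f \in F S (X + Y)%type,
        finalX f = A, restrX A f = g & restrY A f = h]
}.

(* p_m(x) = |F(S,X)| with |S| = m, |X| = x (well defined by (i)) *)
Definition pcount (F : fclass) (m x : nat) : nat := #|F 'I_m 'I_x|.

(* X = {1,...,x} is represented by 'I_x, the element i standing for i+1. *)
Definition final_nat (m x : nat) (f : {ffun 'I_m -> 'I_m + 'I_x}) (s : 'I_m) : nat :=
  if final f s is Some y then (val y).+1 else 0.

Definition ord_cond (x : nat) (zs : seq nat)
    (f : {ffun 'I_(size zs) -> 'I_(size zs) + 'I_x}) : bool :=
  let fs := sort leq [seq final_nat f s | s <- enum 'I_(size zs)] in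
  [forall j : 'I_(size zs), nth 0 fs j <= nth 0 zs j].

Definition ord (F : fclass) (x : nat) (zs : seq nat) : nat :=
  #|[set f in F 'I_(size zs) 'I_x | @ord_cond x zs f]|.

(* Main.v *)
Require Import Defs.
From mathcomp Require Import all_boot zify.

Section Iter.
Variables (S X : Type) (f : S -> S + X).

Lemma iter_inr k x : iter k (step f) (inr x) = inr x.
Proof. by elim: k => //= k ->. Qed.

Lemma iter_stable k k' u x : iter k (step f) u = inr x -> k <= k' ->
  iter k' (step f) u = inr x.
Proof.
move=> H le; rewrite -(subnK le) iterD H; exact: iter_inr.
Qed.

Lemma iter_per i j u : iter i (step f) u = iter j (step f) u -> i < j ->
  forall m, exists2 t, t < j & iter m (step f) u = iter t (step f) u.
Proof.
move=> E lij m; elim/ltn_ind: m => m IH.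
case: (ltnP m j) => hm; first by exists m.
have -> : iter m (step f) u = iter (m - j + i) (step f) u.
  have -> : m = m - j + j by rewrite subnK.
  by rewrite iterD -E -iterD subnK.
apply: IH; lia.
Qed.
End Iter.
Arguments iter_inr {S X f}.
Arguments iter_stable {S X f k k' u x}.
Arguments iter_per {S X f i j u}.

Definition isr {S X : Type} (u : S + X) : bool := if u is inr _ then true else false.

Section Reach.
Variables (S : finType) (X : Type) (f : S -> S + X).

Lemma reach : reluctant f -> forall s, exists x, iter #|S| (step f) (inl s) = inr x.
Proof.
move=> Hr s.
have exP : exists k, isr (iter k (step f) (inl s)).
  by case: (Hr s) => k [_ [x Hx]]; exists k; rewrite Hx.
case: (ex_minnP exP) => k0 Hk0 Hmin.
have Hlt : forall t, t < k0 -> exists s', iter t (step f) (inl s) = inl s'.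
  move=> t ht; case E: (iter t (step f) (inl s)) => [s'|x]; first by exists s'.
  by have := Hmin t; rewrite E /= => /(_ isT); rewrite leqNgt ht.
pose h (t : 'I_k0) : S := if iter t (step f) (inl s) is inl s' then s' else s.
have noper : forall i j : nat, i < j -> j < k0 ->
    iter i (step f) (inl s) <> iter j (step f) (inl s).
  move=> i j hij hj E.
  have [t ht E2] := iter_per E hij k0.
  have [s' Hs'] := Hlt t (ltn_trans ht hj).
  by move: Hk0; rewrite E2 Hs'.
have hinj : injective h.
  move=> i j; rewrite /h.
  case: (Hlt i (ltn_ord i)) => si Ei; case: (Hlt j (ltn_ord j)) => sj Ej.
  rewrite Ei Ej => Eij; subst sj.
  apply/val_inj/eqP; case: (ltngtP i j) => // hij.
    by case: (noper _ _ hij (ltn_ord j)); rewrite Ei Ej.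
  by case: (noper _ _ hij (ltn_ord i)); rewrite Ei Ej.
have := @leq_card _ _ h hinj; rewrite card_ord => hk.
move: Hk0; case E: (iter k0 (step f) (inl s)) => [//|x] _.
by exists x; apply: iter_stable E hk.
Qed.
End Reach.
Arguments reach {S X f}.

Section FinalA.
Variables (S : finType) (X : Type) (f : S -> S + X).

Lemma final_iter s x : iter #|S| (step f) (inl s) = inr x -> final f s = Some x.
Proof. by rewrite /final => ->. Qed.

Lemma final_some : reluctant f -> forall s, exists x, final f s = Some x.
Proof. by move=> Hr s; have [x Hx] := reach Hr s; exists x; apply: final_iter _ _ Hx. Qed.

Lemma final_inr s u : f s = inr u -> final f s = Some u.
Proof.
move=> E; apply: final_iter.
have : 0 < #|S| by apply/card_gt0P; exists s.
case: #|S| => // k _; by rewrite iterSr /= E iter_inr.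
Qed.

Lemma final_inl s s' : reluctant f -> f s = inl s' -> final f s' = final f s.
Proof.
move=> Hr E.
have [a Ha] := reach Hr s'; have [b Hb] := reach Hr s.
rewrite (final_iter _ _ Ha) (final_iter _ _ Hb).
have := iterSr #|S| (step f) (inl s); rewrite /= E Ha /= Hb /=.
by case=> ->.
Qed.
End FinalA.
Arguments final_iter {S X f s x}.
Arguments final_some {S X f}.
Arguments final_inr {S X f s u}.
Arguments final_inl {S X f s s'}.

Definition conjf {S S' X X' : finType} (sg : S -> S') (sg' : S' -> S) (tau : X -> X')
  (f : {ffun S -> S + X}) : {ffun S' -> S' + X'} :=
  [ffun s' => sum_map sg tau (f (sg' s'))].

Section Conj.
Variables (S S' X X' : finType) (sg : S -> S') (sg' : S' -> S) (tau : X -> X').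
Hypothesis sgK : cancel sg sg'.

Lemma conjfE f s : conjf sg sg' tau f (sg s) = sum_map sg tau (f s).
Proof. by rewrite ffunE sgK. Qed.

Lemma conjf_iter f k u :
  iter k (step (conjf sg sg' tau f)) (sum_map sg tau u) = sum_map sg tau (iter k (step f) u).
Proof.
elim: k => //= k ->; case: (iter k (step f) u) => [s|x] //=; exact: conjfE.
Qed.

Lemma final_conj f s : #|S| = #|S'| ->
  final (conjf sg sg' tau f) (sg s) = omap tau (final f s).
Proof.
move=> e; rewrite /final -e.
have := conjf_iter f #|S| (inl s); rewrite /= => ->.
by case: (iter #|S| (step f) (inl s)).
Qed.

Lemma conjfK (tau' : X' -> X) : cancel tau tau' ->
   cancel (conjf sg sg' tau) (conjf sg' sg tau').
Proof.
move=> tauK f; apply/ffunP => s; rewrite !ffunE sgK.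
by case: (f _) => [a|b] /=; rewrite ?sgK ?tauK.
Qed.
End Conj.

Section Transport.
Variables (F : fclass) (HF : binomial_class F).
Variables (S S' X X' : finType) (sg : S -> S') (sg' : S' -> S) (tau : X -> X') (tau' : X' -> X).
Hypotheses (sgK : cancel sg sg') (sgK' : cancel sg' sg) (tauK : cancel tau tau') (tauK' : cancel tau' tau).

Lemma conjf_inF f : (f \in F S X) = (conjf sg sg' tau f \in F S' X').
Proof.
apply: (bc_bij HF (Bijective sgK sgK') (Bijective tauK tauK')).
exact: conjfE.
Qed.

Lemma transport (P : pred {ffun S' -> S' + X'}) (P' : pred {ffun S -> S + X}) :
  {in F S X, forall f, P' f = P (conjf sg sg' tau f)} ->
  #|[set f in F S X | P' f]| = #|[set f in F S' X' | P f]|.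
Proof.
move=> HP.
rewrite -(card_imset _ (can_inj (@conjfK _ _ _ _ _ _ _ sgK _ tauK))).
apply: eq_card => g; rewrite [in RHS]inE; apply/imsetP/idP.
  case=> f; rewrite inE => /andP [fF Pf] ->.
  by rewrite -conjf_inF fF -HP.
move=> /andP [gF Pg].
have hK : conjf sg sg' tau (conjf sg' sg tau' g) = g by exact: (@conjfK _ _ _ _ _ _ _ sgK' _ tauK' g).
exists (conjf sg' sg tau' g) => //.
by rewrite inE conjf_inF hK gF HP ?hK // conjf_inF hK.
Qed.
End Transport.
Arguments transport {F} HF {S S' X X' sg sg' tau tau'} sgK sgK' tauK tauK' P P'.
Arguments conjf_inF {F} HF {S S' X X' sg sg' tau tau'} sgK sgK' tauK tauK'.

Lemma card_bij (T T' : finType) : #|T| = #|T'| ->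
  exists sg : T -> T', exists sg' : T' -> T, cancel sg sg' /\ cancel sg' sg.
Proof.
move=> e.
exists (fun t => enum_val (cast_ord e (enum_rank t))).
exists (fun t => enum_val (cast_ord (esym e) (enum_rank t))).
by split => t; rewrite enum_valK ?cast_ordK ?cast_ordKV enum_rankK.
Qed.

Section Core.
Variables (F : fclass) (HF : binomial_class F).

Lemma core (S X Y : finType) (A : {set S})
  (Q : pred {ffun {s : S | s \in A} -> {s : S | s \in A} + X}) :
  #|[set f in F S (X + Y)%type | (finalX f == A) && Q (restrX A f)]| =
  #|[set g in F _ X | Q g]| * #|F {s : S | s \notin A} Y|.
Proof.
rewrite -cardsX.
pose phi (f : {ffun S -> S + (X + Y)}) := (restrX A f, restrY A f).
rewrite -(@card_in_imset _ _ phi).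
  apply: eq_card => p; rewrite [in RHS]inE; apply/imsetP/idP.
    case=> f; rewrite !inE => /andP [fF /andP [/eqP fA Qf]] -> /=.
    have := bc_split_into HF fF; rewrite fA => -[H1 H2].
    by rewrite H1 Qf H2.
  case: p => g h; rewrite /= !inE => /andP [/andP [gF Qg] hF].
  have [f [fF fA fg fh]] := bc_split_onto HF gF hF.
  exists f; last by rewrite /phi fg fh.
  by rewrite inE fF fA eqxx fg.
move=> f g; rewrite !inE => /andP [fF /andP [/eqP fA _]] /andP [gF /andP [/eqP gA _]] [e1 e2].
apply: (bc_split_inj HF fF gF); rewrite ?fA ?gA //.
Qed.
End Core.

Section Restr.
Variables (S X Y : finType) (f : {ffun S -> S + (X + Y)}) (A : {set S}).
Hypotheses (Hf : reluctant f) (fA : finalX f = A) (Hg : reluctant (restrX A f)).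

Let g := restrX A f.

Lemma inA_final s : s \in A -> exists x, final f s = Some (inl x).
Proof.
rewrite -fA inE; case: (final f s) => [[x|y]|] //; by exists x.
Qed.

Lemma restr_sim k (u : {s | s \in A} + X) :
  iter k (step f) (sum_map val inl u) = sum_map val inl (iter k (step g) u).
Proof.
elim: k => //= k ->; case: (iter k (step g) u) => [t|x] //=.
rewrite /g ffunE.
have [x0 Hx0] := inA_final _ (valP t).
case E: (f (val t)) => [s'|[x|y]] //=.
  have hs' : s' \in A.
    by rewrite -fA inE (final_inl Hf E) Hx0.
  by rewrite insubT.
by move: Hx0; rewrite (final_inr E).
Qed.

Lemma restr_final (t : {s | s \in A}) : final f (val t) = omap inl (final g t).
Proof.
have [y Hy] := reach Hg t.
have Hy' : iter #|S| (step g) (inl t) = inr y.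
  apply: (iter_stable Hy); rewrite card_sig; exact: max_card.
rewrite (final_iter Hy).
apply: final_iter.
by have := restr_sim #|S| (inl t); rewrite Hy' /=.
Qed.
End Restr.

Lemma sorted_cnt (c : nat) (s : seq nat) : sorted leq s -> forall j, j < size s ->
  (nth 0 s j <= c) = (j < count (fun a => a <= c) s).
Proof.
elim: s => //= a s IH hs.
have hs' : sorted leq s := path_sorted hs.
have hall : all (leq a) s := order_path_min leq_trans hs.
case: (leqP a c) => hac.
  move=> [|j] //= hj; rewrite add1n ltnS; exact: IH.
have hc0 : count (fun a0 => a0 <= c) s = 0.
  apply/eqP; rewrite -leqn0 leqNgt -has_count; apply/hasPn => b hb /=.
  by rewrite -ltnNge; apply: (leq_trans hac); move/allP: hall => /(_ b hb).
rewrite hc0 => -[|j] hj /=; first by rewrite leqNgt hac.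
apply/negbTE; rewrite -ltnNge; apply: (leq_trans hac).
by move/allP: hall; apply; apply: mem_nth.
Qed.

Lemma sorted_filt (c : nat) (s : seq nat) : sorted leq s ->
  filter (fun a => a <= c) s = take (count (fun a => a <= c) s) s.
Proof.
elim: s => //= a s IH hs.
have hs' : sorted leq s := path_sorted hs.
have hall : all (leq a) s := order_path_min leq_trans hs.
case: (leqP a c) => hac /=; first by rewrite IH.
rewrite add0n.
have hc0 : count (fun a0 => a0 <= c) s = 0.
  apply/eqP; rewrite -leqn0 leqNgt -has_count; apply/hasPn => b hb /=.
  by rewrite -ltnNge; apply: (leq_trans hac); move/allP: hall => /(_ b hb).
rewrite hc0 take0; apply/eqP; rewrite -size_eq0 size_filter hc0 //.
Qed.

Arguments sorted_cnt c {s}.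
Arguments sorted_filt c {s}.
Section Lists.
Variables (z : seq nat).
Hypothesis hz : sorted leq z.

Definition Rz (i : nat) (l : seq nat) : bool :=
  [forall j : 'I_i, nth 0 l j <= nth 0 (take i z) j].
Definition ordc (l : seq nat) : bool :=
  [forall j : 'I_(size z), nth 0 l j <= nth 0 z j].
Definition Pi (i : nat) (l : seq nat) : bool :=
  Rz i l && (nth 0 z i < nth 0 l i).

Lemma Rz_take i l : Rz i (take i l) = Rz i l.
Proof. by apply: eq_forallb => j; rewrite nth_take. Qed.

Lemma Rz_nth i l j : Rz i l -> j < i -> nth 0 l j <= nth 0 z j.
Proof.
move=> /forallP H hj; have := H (Ordinal hj); by rewrite /= nth_take.
Qed.

Lemma z_mono j i : j <= i -> i < size z -> nth 0 z j <= nth 0 z i.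
Proof.
move=> hji hi.
apply: (sorted_leq_nth leq_trans leqnn 0 hz) => //; rewrite inE //.
exact: leq_ltn_trans hji hi.
Qed.

Lemma key_list i (l : seq nat) : i < size z -> i < size l ->
  Pi i (sort leq l) =
  (count (fun a => a <= nth 0 z i) l == i) &&
  Rz i (sort leq (filter (fun a => a <= nth 0 z i) l)).
Proof.
move=> hi hl; set c := nth 0 z i.
set s := sort leq l.
have ss : sorted leq s := sort_sorted leq_total l.
have szs : size s = size l by rewrite size_sort.
have -> : count (fun a => a <= c) l = count (fun a => a <= c) s.
  by apply/permP; rewrite perm_sym perm_sort.
rewrite -filter_sort; [|exact: leq_total|exact: leq_trans].
rewrite -/s (sorted_filt c ss).
have hsi : i < size s by rewrite szs.
rewrite /Pi; apply/idP/idP.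
  case/andP => hR hc.
  have k_le : count (fun a => a <= c) s <= i.
    by rewrite leqNgt -(sorted_cnt c ss _ hsi) -ltnNge.
  have k_ge : i <= count (fun a => a <= c) s.
    case: (posnP i) => [->//|ipos].
    have hj : i.-1 < i by rewrite ltn_predL.
    rewrite -(prednK ipos) -(sorted_cnt c ss _ (ltn_trans hj hsi)).
    apply: leq_trans (Rz_nth _ _ _ hR hj) _; exact: z_mono _ _ (leq_pred i) hi.
  have -> : count (fun a => a <= c) s = i by apply/eqP; rewrite eqn_leq k_le k_ge.
  by rewrite eqxx Rz_take.
case/andP => /eqP hk; rewrite hk Rz_take => ->.
by rewrite ltnNge (sorted_cnt c ss _ hsi) hk ltnn.
Qed.

Lemma exactly_one (l : seq nat) :
  ordc l + \sum_(i < size z) Pi i l = 1.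
Proof.
case: (boolP (ordc l)) => ho.
  rewrite big1 // => i _; apply/eqP; rewrite eqb0 /Pi negb_and -leqNgt.
  by move/forallP: ho => /(_ i) ->; rewrite orbT.
have exP : exists j, (j < size z) && (nth 0 z j < nth 0 l j).
  move/forallPn: ho => [j hj]; exists j; by rewrite ltn_ord ltnNge.
case: (ex_minnP exP) => i0 /andP [hi0 hbad] hmin.
rewrite add0n (bigD1 (Ordinal hi0)) //=.
have -> : Pi i0 l.
  rewrite /Pi hbad andbT; apply/forallP => j; rewrite nth_take //.
  rewrite leqNgt; apply/negP => hb.
  have := hmin j; rewrite hb (ltn_trans (ltn_ord j) hi0) => /(_ isT).
  by rewrite leqNgt ltn_ord.
rewrite big1 // => j hj; apply/eqP; rewrite eqb0 /Pi negb_and.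
case: (ltngtP j i0) => h.
- apply/orP; right; rewrite -leqNgt leqNgt; apply/negP => hb.
  have := hmin j; rewrite hb ltn_ord => /(_ isT); by rewrite leqNgt h.
- apply/orP; left; apply/negP => /forallP /(_ (Ordinal h)) /=.
  by rewrite nth_take // leqNgt hbad.
- by move: hj; rewrite -val_eqE /= h eqxx.
Qed.
End Lists.

Definition fnat {S : finType} {k : nat} (f : S -> S + 'I_k) (s : S) : nat :=
  if final f s is Some y then (val y).+1 else 0.
Definition Lf {S : finType} {k : nat} (f : {ffun S -> S + 'I_k}) : seq nat :=
  [seq fnat f s | s <- enum S].

Lemma enum_perm (S S' : finType) (sg : S -> S') (sg' : S' -> S) :
  cancel sg sg' -> cancel sg' sg -> perm_eq (enum S') (map sg (enum S)).
Proof.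
move=> K1 K2; apply: uniq_perm; first exact: enum_uniq.
  by rewrite map_inj_uniq ?enum_uniq //; exact: can_inj K1.
move=> s'; rewrite mem_enum; symmetry; rewrite -(K2 s'); apply: map_f.
by rewrite mem_enum.
Qed.

Lemma Lf_conj (S S' : finType) k (sg : S -> S') (sg' : S' -> S)
  (K1 : cancel sg sg') (K2 : cancel sg' sg) (g : {ffun S -> S + 'I_k}) :
  perm_eq (Lf (conjf sg sg' id g)) (Lf g).
Proof.
have e : #|S| = #|S'| := bij_eq_card (Bijective K1 K2).
rewrite /Lf; apply: perm_trans (perm_map _ (enum_perm _ _ _ _ K1 K2)) _.
rewrite -map_comp; apply/permP => p; congr count; apply: eq_map => s /=.
rewrite /fnat (@final_conj _ _ _ _ _ _ _ K1 g s e).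
by case: (final g s).
Qed.

Section Split.
Variables (c x : nat) (hc : c <= x).
Definition tau (y : 'I_x) : 'I_c + 'I_(x - c) := split (cast_ord (esym (subnKC hc)) y).
Definition tau' (u : 'I_c + 'I_(x - c)) : 'I_x := cast_ord (subnKC hc) (unsplit u).
Lemma tauK : cancel tau tau'.
Proof. by move=> y; rewrite /tau /tau' splitK cast_ordKV. Qed.
Lemma tauK' : cancel tau' tau.
Proof. by move=> u; rewrite /tau /tau' cast_ordK unsplitK. Qed.
Lemma tau_spec (y : 'I_x) :
  if tau y is inl y' then (val y' == val y) && (val y < c) else c <= val y.
Proof.
rewrite /tau; case: splitP => j /= ->; first by rewrite eqxx ltn_ord.
exact: leq_addr.
Qed.
End Split.
Arguments tau {c x} hc.
Arguments tau' {c x} hc.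
Arguments tauK {c x} hc.
Arguments tauK' {c x} hc.
Arguments tau_spec {c x} hc y.

Section MainSplit.
Variables (F : fclass) (HF : binomial_class F).

Lemma cardF_set (S X : finType) : #|F S X| = #|[set f in F S X | true]|.
Proof. by apply: eq_card => f; rewrite inE andbT. Qed.

Lemma sort_perm (l1 l2 : seq nat) : perm_eq l1 l2 -> sort leq l1 = sort leq l2.
Proof. by move/(perm_sortP leq_total leq_trans anti_leq). Qed.

Lemma main_split m i c x (hc : c <= x) (A : {set 'I_m}) (hA : #|A| = i)
  (R : pred (seq nat)) :
  #|[set f in F 'I_m 'I_x | ([set s | fnat f s <= c] == A) &&
        R (sort leq (filter (fun a => a <= c) (Lf f)))]| =
  #|[set g in F 'I_i 'I_c | R (sort leq (Lf g))]| * #|F 'I_(m - i) 'I_(x - c)|.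
Proof.
rewrite (@transport F HF _ _ _ _ id id (tau hc) (tau' hc) (fun _ => erefl) (fun _ => erefl)
   (tauK hc) (tauK' hc)
   (fun f2 => (finalX f2 == A) && R (sort leq (Lf (restrX A f2))))).
  rewrite (core F HF _ _ _ A (fun g => R (sort leq (Lf g)))).
  congr (_ * _).
    have e1 : #|{: {s : 'I_m | s \in A}}| = #|'I_i|.
      by rewrite card_sig card_ord -hA; apply: eq_card => s; rewrite inE.
    have [sg [sg' [K1 K2]]] := card_bij _ _ e1.
    apply: (@transport F HF _ _ _ _ sg sg' id id K1 K2 (fun _ => erefl) (fun _ => erefl)
       (fun g => R (sort leq (Lf g))) (fun g => R (sort leq (Lf g)))).
    move=> g _; by rewrite (sort_perm _ _ (Lf_conj _ _ _ _ _ K1 K2 g)).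
  have e2 : #|{: {s : 'I_m | s \notin A}}| = #|'I_(m - i)|.
    have hC := cardC A; rewrite card_ord in hC.
    rewrite card_sig card_ord -hA.
    have h2 : #|[pred x | x \notin A]| = #|[predC A]| by apply: eq_card => s; rewrite !inE.
    rewrite h2; move: hC; set a := #|A|; set b := #|[predC A]|; lia.
  have [sg [sg' [K1 K2]]] := card_bij _ _ e2.
  rewrite !cardF_set.
  exact: (@transport F HF _ _ _ _ sg sg' id id K1 K2 (fun _ => erefl) (fun _ => erefl)
       (fun _ => true) (fun _ => true)).
move=> f fF.
set f2 := conjf id id (tau hc) f.
have Hr := bc_reluctant HF fF.
have f2F : f2 \in F _ _ by rewrite -(conjf_inF HF (fun _ => erefl) (fun _ => erefl) (tauK hc) (tauK' hc)).
have Hr2 := bc_reluctant HF f2F.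
have Ef2 : forall s, final f2 s = omap (tau hc) (final f s).
  by move=> s; exact: (@final_conj _ _ _ _ id id (tau hc) (fun _ => erefl) f s erefl).
have Elow : [set s | fnat f s <= c] = finalX f2.
  apply/setP => s; rewrite !inE Ef2 /fnat; have [y ->] := final_some Hr s; rewrite /=.
  have := tau_spec hc y; case: (tau hc y) => [y'|y'] /=.
    by case/andP.
  by move=> h; rewrite ltnNge h.
rewrite Elow; case: eqP => // hA2 /=.
congr R; apply: sort_perm.
have gF : restrX A f2 \in F _ _ by have := bc_split_into HF f2F; rewrite hA2 => -[].
have Hg := bc_reluctant HF gF.
have Efn : forall t, fnat (restrX A f2) t = fnat f (val t).
  move=> t; have := restr_final _ _ _ _ _ Hr2 hA2 Hg t; rewrite Ef2 /fnat.
  have [y ->] := final_some Hr (val t); case: (final (restrX A f2) t) => [y'|] //=.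
  have := tau_spec hc y; case: (tau hc y) => [y1|y1] //= /andP [/eqP e _] [<-].
  by rewrite e.
rewrite /Lf.
have -> : [seq fnat (restrX A f2) s | s <- enum {: {s : 'I_m | s \in A}}] =
          [seq fnat f s | s <- map val (enum {: {s : 'I_m | s \in A}})].
  by rewrite -[RHS]map_comp; apply: eq_map => t /=; exact: Efn.
rewrite filter_map; apply: perm_map.
apply: uniq_perm; first by rewrite filter_uniq ?enum_uniq.
  by rewrite map_inj_uniq ?enum_uniq //; exact: val_inj.
move=> s; rewrite mem_filter /= mem_enum andbT.
have -> : (fnat f s <= c) = (s \in A) by rewrite -hA2 -Elow inE.
case: (boolP (s \in A)) => hs; apply/esym.
  by apply/mapP; exists (exist _ s hs); rewrite ?mem_enum.
apply/negP => /mapP [t _ e]; move: hs; by rewrite e (valP t).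
Qed.
End MainSplit.

Lemma cnt (T : finType) (P : pred T) : count P (enum T) = #|[set s | P s]|.
Proof. rewrite -size_filter cardE /enum_mem filter_predT. congr size; apply: eq_filter => s; by rewrite !inE. Qed.

Lemma sum_bool (T : finType) (D : {pred T}) (P : pred T) :
  \sum_(f in D) (P f : nat) = #|[set f in D | P f]|.
Proof.
transitivity (\sum_(f in D | P f) 1).
  by rewrite big_mkcondr; apply: eq_bigr => f _; case: (P f).
rewrite -sum1_card; apply: eq_bigl => f; by rewrite inE.
Qed.

Lemma size_Lf (m k : nat) (f : {ffun 'I_m -> 'I_m + 'I_k}) : size (Lf f) = m.
Proof. by rewrite size_map size_enum_ord. Qed.

Section FinalB.
Variables (F : fclass) (HF : binomial_class F)
  (Hempty : forall S X : finType, #|S| = 0 -> #|F S X| = 1).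
Variables (x : nat) (z : seq nat) (hz : sorted leq z)
  (hrange : all (fun t => (1 <= t) && (t <= x)) z).

Lemma ord_gen zs m (e : size zs = m) :
  ord F x zs = #|[set g in F 'I_m 'I_x |
       [forall j : 'I_m, nth 0 (sort leq (Lf g)) j <= nth 0 zs j]]|.
Proof. rewrite /ord /ord_cond; move: (size zs) e => k e; subst k; by []. Qed.

Lemma low_setT i c (g : {ffun 'I_i -> 'I_i + 'I_x}) :
  ([set s | fnat g s <= c] == setT) = all (fun a => a <= c) (Lf g).
Proof.
apply/eqP/allP.
  move=> H a /mapP [s _ ->]; have : s \in [set s | fnat g s <= c] by rewrite H inE.
  by rewrite inE.
move=> H; apply/setP => s; rewrite !inE; apply: H; apply: map_f; by rewrite mem_enum.
Qed.

Lemma ord_take i (hi : i < size z) :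
  ord F x (take i z) = #|[set g in F 'I_i 'I_(nth 0 z i) | Rz z i (sort leq (Lf g))]|.
Proof.
set c := nth 0 z i.
have hc : c <= x.
  by move/allP: hrange => /(_ c (mem_nth 0 hi)) /andP [].
rewrite (@ord_gen _ i); last by rewrite size_take hi.
have hA : #|[set: 'I_i]| = i by rewrite cardsT card_ord.
have := main_split F HF _ _ _ _ hc _ hA (Rz z i).
rewrite (Hempty _ _); last by rewrite card_ord subnn.
rewrite muln1 => <-.
apply: eq_card => g; rewrite !inE; congr (_ && _).
rewrite low_setT.
case: (boolP (all (fun a => a <= c) (Lf g))) => hall.
  by rewrite /= (all_filterP hall).
rewrite andFb; apply/negP => hR; move/negP: hall; apply; apply/allP => a ha.
have ha' : a \in sort leq (Lf g) by rewrite mem_sort.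
set s := sort leq (Lf g) in ha' hR.
have hs : size s = i by rewrite size_sort size_Lf.
have hj : index a s < i by rewrite -hs index_mem.
have := Rz_nth _ _ _ _ hR hj; rewrite nth_index //.
move=> h; apply: leq_trans h _; apply: z_mono hz _ _ _ hi; exact: ltnW.
Qed.

Lemma Pi_count i (hi : i < size z) :
  #|[set f in F 'I_(size z) 'I_x | Pi z i (sort leq (Lf f))]| =
  'C(size z, i) * pcount F (size z - i) (x - nth 0 z i) * ord F x (take i z).
Proof.
set n := size z; set c := nth 0 z i.
have hc : c <= x.
  by move/allP: hrange => /(_ c (mem_nth 0 hi)) /andP [].
pose low (f : {ffun 'I_n -> 'I_n + 'I_x}) := [set s | fnat f s <= c].
pose R (f : {ffun 'I_n -> 'I_n + 'I_x}) := Rz z i (sort leq (filter (fun a => a <= c) (Lf f))).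
have E1 : [set f in F 'I_n 'I_x | Pi z i (sort leq (Lf f))] =
          [set f in F 'I_n 'I_x | (#|low f| == i) && R f].
  apply/setP => f; rewrite !inE; congr (_ && _).
  rewrite (key_list _ hz) ?size_Lf //; congr (_ && _).
  by rewrite /Lf count_map cnt.
rewrite E1 -sum1_card.
rewrite (partition_big low (fun A => #|A| == i)); last first.
  by move=> f; rewrite inE => /andP [_ /andP []].
transitivity (\sum_(A in [set A : {set 'I_n} | #|A| == i])
     (#|[set g in F 'I_i 'I_c | Rz z i (sort leq (Lf g))]| * #|F 'I_(n - i) 'I_(x - c)|)).
  apply: eq_big => A; first by rewrite inE.
  move=> /eqP hA; rewrite -(main_split F HF _ _ _ _ hc _ hA) -sum1_card.
  apply: eq_bigl => f; rewrite !inE.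
  case: (f \in F _ _) => //=.
  case: (boolP (low f == A)) => hl; rewrite ?andbF ?andbT //.
  by rewrite (eqP hl) hA eqxx.
rewrite sum_nat_const card_draws card_ord -ord_take // /pcount.
by rewrite -mulnA [ord F x _ * _]mulnC.
Qed.

Lemma final_sum :
  #|F 'I_(size z) 'I_x| =
    \sum_(i < size z) 'C(size z, i) * pcount F (size z - i) (x - nth 0 z i) * ord F x (take i z)
    + ord F x z.
Proof.
rewrite (@ord_gen z (size z)) //.
rewrite -sum1_card.
transitivity (\sum_(f in F 'I_(size z) 'I_x)
   (ordc z (sort leq (Lf f)) + \sum_(i < size z) Pi z i (sort leq (Lf f)))).
  by apply: eq_bigr => f _; rewrite exactly_one.
rewrite big_split /= sum_bool addnC; congr (_ + _).
rewrite exchange_big /=; apply: eq_bigr => i _.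
by rewrite sum_bool Pi_count.
Qed.
End FinalB.

Theorem mainTheorem17 (F : fclass) (HF : binomial_class F)
  (Hempty : forall S X : finType, #|S| = 0 -> #|F S X| = 1)
  (x : nat) (hx : 0 < x) (n : nat) (z : seq nat)
  (hsize : size z = n) (hsorted : sorted leq z)
  (hrange : all (fun t => (1 <= t) && (t <= x)) z) :
  pcount F n x =
    \sum_(i < n) 'C(n, i) * pcount F (n - i) (x - nth 0 z i) * ord F x (take i z)
    + ord F x z.
Proof.
subst n.
exact: (final_sum F HF Hempty x z hsorted hrange).
Qed.
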